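(* Let $\mu, t \in \mathbb{R}$ and $\sigma > 0$. Let $\mathcal{L}_S(\mu,\sigma)$ be the set of all probability distributions $F$ on $\mathbb{R}$ such that, for $X \sim F$, $\mathbb{E}^F[X]=\mu$, $\mathbb{E}^F[X^2]=\mu^2+\sigma^2$, and $F$ is symmetric. Then \[ \sup_{F \in \mathcal{L}_{S}(\mu, \sigma)}\mathbb{E}^{F}[(X-t)_{+}^2]= \begin{cases} \sigma^2 + (t-\mu)^2, & t \le \mu-\sigma,\\ \frac{1}{2}(\mu- t+\sigma)^2, & \mu-\sigma < t\leq \mu,\\ \frac{\sigma^2}{2}, & t > \mu. \end{cases} \]
   Context: For $x\in\mathbb{R}$, $(x)_+=\max\{x,0\}$. A distribution $F$ of a random variable $X$ is called symmetric if there exists a constant $a\in\mathbb{R}$ such that $\mathbb{P}(X-a>x)=\mathbb{P}(X-a<-x)$ for all $x\in\mathbb{R}$ under $F$. $\mathbb{E}^F$ denotes expectation when $X$ has distribution $F$. *)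

(* Defs.v *)
From HB Require Import structures.
From mathcomp Require Import all_boot all_order all_algebra.
From mathcomp Require Import all_classical all_reals all_analysis.
Set Implicit Arguments. Unset Strict Implicit. Unset Printing Implicit Defensive.
Import Order.TTheory GRing.Theory Num.Theory.
Local Open Scope classical_set_scope.
Local Open Scope ring_scope.

(* F : a probability distribution on the Borel sets of R; X is the identity. *)

Definition symmetric_distr (R : realType) (F : probability R R) : Prop :=
  exists a : R, forall x : R,
    F [set y : R | x < y - a] = F [set y : R | y - a < - x].

Definition LS (R : realType) (mu sigma : R) : set (probability R R) :=
  [set F : probability R R | [/\ F.-integrable setT (fun x : R => x%:E),
              (\int[F]_x (x%:E) = mu%:E)%E,
              (\int[F]_x ((x ^+ 2)%:E) = (mu ^+ 2 + sigma ^+ 2)%:E)%E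
            & symmetric_distr F]].

Definition stop_loss2 (R : realType) (t : R) (F : probability R R) : \bar R :=
  (\int[F]_x (((Num.max (x - t) 0) ^+ 2)%:E))%E.

(* Main.v *)
Require Import Defs.
From HB Require Import structures.
From mathcomp Require Import all_boot all_order all_algebra.
From mathcomp Require Import all_classical all_reals all_analysis measurable_realfun.
From mathcomp Require Import ring lra.
Import Order.TTheory GRing.Theory Num.Theory.
Local Open Scope classical_set_scope.
Local Open Scope ring_scope.

Lemma sym_measure (R : realType) (F : probability R R) (a : R) :
  (forall x : R, F [set y : R | x < y - a] = F [set y : R | y - a < - x]) ->
  forall A, measurable A -> F A = pushforward F (fun y => 2 * a - y) A.
Proof.
move=> hs.
have mpsi : measurable_fun setT (fun y : R => 2 * a - y).
  by apply: measurable_funB => //.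
move=> A mA.
have mG : @measurable _ R = <<s @RGenOInfty.G R >>.
  have := @RGenOInfty.measurableE R. rewrite /measurable/=. unfold measurableR. exact.
have := @measure_unique _ R R (@RGenOInfty.G R) (fun k : nat => `]- (k%:R), +oo[%classic) mG _ _ _ F (pushforward F (fun y => 2 * a - y)) _ _ A mA.
apply => //.
- move=> _ _ [x ->] [y ->]; exists (Num.max x y).
  apply/seteqP; split => z /=; rewrite !in_itv /= !andbT.
    by move=> [h1 h2]; rewrite gt_max h1 h2.
  by rewrite gt_max => /andP[].
- by move=> k; exists (1 *- k).
- apply/seteqP; split => // r _.
  exists (Num.truncn (- r)).+1 => //=.
  rewrite in_itv /= andbT ltrNl.
  exact: Num.Theory.truncnS_gt.
- move=> _ [x ->].
  have := hs (x - a).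
  rewrite /pushforward.
  have -> : [set y | x - a < y - a] = `]x, +oo[%classic.
    by apply/seteqP; split => z /=; rewrite in_itv /= andbT; lra.
  move=> h; apply: (eq_trans h) => /=; congr (F _).
  by apply/seteqP; split => z /=; rewrite in_itv /= andbT; lra.
- move=> k. apply: (le_lt_trans (probability_le1 _ _)) => //.
  exact: ltry.
Qed.


Lemma sym_integral (R : realType) (F : probability R R) (a : R) :
  (forall x : R, F [set y : R | x < y - a] = F [set y : R | y - a < - x]) ->
  forall f : R -> \bar R, measurable_fun setT f -> (forall x, (0 <= f x)%E) ->
  (\int[F]_x f x = \int[F]_x f (2 * a - x)%R)%E.
Proof.
move=> hs f mf f0.
have mpsi : measurable_fun setT (fun y : R => 2 * a - y).
  by apply: measurable_funB => //.
rewrite (@eq_measure_integral _ _ _ _ (pushforward F (fun y => 2 * a - y))); last first.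
  by move=> B mB _; exact: sym_measure.
rewrite ge0_integral_pushforward //.
Qed.

Lemma sym_mean (R : realType) (F : probability R R) (a m : R) :
  (forall x : R, F [set y : R | x < y - a] = F [set y : R | y - a < - x]) ->
  F.-integrable setT (fun x : R => x%:E) ->
  (\int[F]_x (x%:E) = m%:E)%E -> m = a.
Proof.
move=> hs hint hm.
have mpsi : measurable_fun setT (fun y : R => 2 * a - y).
  by apply: measurable_funB => //.
have ipsi : F.-integrable setT (fun x : R => (2 * a - x)%:E).
  have h1 := finite_measure_integrable_cst F (2 * a) (@measurableT _ R).
  have h2 := @integrableB _ _ _ F setT (@measurableT _ R) _ _ h1 hint.
  apply: eq_integrable h2; [exact: measurableT|]. by move=> x _ /=; rewrite EFinB.
have : (\int[F]_x (x%:E) = \int[pushforward F (fun y => 2 * a - y)%R]_x (x%:E))%E.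
  by apply: eq_measure_integral => B mB _; exact: sym_measure.
rewrite integral_pushforward //= preimage_setT.
under [X in _ = X -> _]eq_integral do rewrite EFinB.
rewrite integralB_EFin //; last exact: (finite_measure_integrable_cst F (2 * a) measurableT).
have P1 : F [set: R] = 1%E by exact: probability_setT.
rewrite integral_cst // => h.
have {h} : (m%:E = (2 * a)%:E * 1 - m%:E)%E.
  rewrite -hm; apply: (etrans h); congr (_ * _ - _)%E; exact: P1.
rewrite mule1 -EFinB => /eqP; rewrite eqe => /eqP h.
lra.
Qed.

Lemma var_eq (R : realType) (F : probability R R) (mu s2 : R) :
  F.-integrable setT (fun x : R => x%:E) ->
  (\int[F]_x (x%:E) = mu%:E)%E ->
  (\int[F]_x ((x ^+ 2)%:E) = (mu ^+ 2 + s2)%:E)%E ->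
  (\int[F]_x (((x - mu) ^+ 2)%:E) = s2%:E)%E.
Proof.
move=> hint h1 h2.
have mx2 : measurable_fun setT (fun x : R => x ^+ 2).
  by apply: measurable_funX.
have i2 : F.-integrable setT (EFin \o (fun x : R => x ^+ 2)).
  apply/integrableP; split; first exact/measurable_EFinP.
  rewrite (eq_integral (fun x : R => (x ^+ 2)%:E)); first by rewrite h2 ltry.
  by move=> x _ /=; rewrite ger0_norm // sqr_ge0.
have ic : F.-integrable setT (EFin \o (fun x : R => mu ^+ 2)).
  exact: (finite_measure_integrable_cst F (mu ^+ 2) (@measurableT _ R)).
have iz : F.-integrable setT (EFin \o (fun x : R => 2 * mu * x)).
  have := @integrableZl _ _ _ F setT (@measurableT _ R) (2 * mu) _ hint.
  apply: eq_integrable; first exact: measurableT.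
  by move=> x _ /=; rewrite EFinM.
have ilin : F.-integrable setT (EFin \o (fun x : R => 2 * mu * x - mu ^+ 2)).
  have := @integrableB _ _ _ F setT (@measurableT _ R) _ _ iz ic.
  apply: eq_integrable; first exact: measurableT.
  by move=> x _ /=; rewrite EFinB.
rewrite (eq_integral (fun x : R => (x ^+ 2)%:E - (2 * mu * x - mu ^+ 2)%:E)%E); last first.
  by move=> x _; rewrite -EFinB; congr EFin; ring.
have P1 : F [set: R] = 1%E by exact: probability_setT.
have e2 : (\int[F]_x ((2 * mu * x - mu ^+ 2)%:E) = (2 * mu * mu - mu ^+ 2)%:E)%E.
  rewrite (eq_integral (fun x : R => (2 * mu * x)%:E - (mu ^+ 2)%:E)%E); last first.
    by move=> x _; rewrite -EFinB.
  rewrite integralB_EFin //.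
  rewrite (eq_integral (fun x : R => (2 * mu)%:E * x%:E)%E); last first.
    by move=> x _; rewrite -EFinM.
  rewrite integralZl //.
  rewrite h1 integral_cst //.
  have -> : ((mu ^+ 2)%:E * F [set: R] = (mu ^+ 2)%:E)%E.
    by apply: (etrans (congr1 (fun z => ((mu ^+ 2)%:E * z)%E) P1)); rewrite mule1.
  by rewrite -EFinM -EFinB.
rewrite integralB_EFin // h2 e2 -EFinB; congr EFin; ring.
Qed.

Lemma msq (R : realType) (f : R -> R) : measurable_fun setT f ->
  measurable_fun setT (fun x : R => Num.max (f x) 0 ^+ 2).
Proof.
move=> mf; apply: measurable_funX.
by apply: (@measurable_maxr _ R R setT f (fun=> 0)).
Qed.

Lemma upper_gen (R : realType) (mu sigma t A C : R) (F : probability R R) :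
  LS mu sigma F -> 0 <= A -> 0 <= C ->
  (forall x, Num.max (x - t) 0 ^+ 2 + Num.max (2 * mu - x - t) 0 ^+ 2
             <= A + C * (x - mu) ^+ 2) ->
  (stop_loss2 t F <= ((A + C * sigma ^+ 2) / 2)%:E)%E.
Proof.
move=> [hint h1 h2 [a hs]] hA hC hpw.
have ema := @sym_mean R F a mu hs hint h1. subst a.
have hv := @var_eq R F mu (sigma ^+ 2) hint h1 h2.
have m1 : measurable_fun setT (fun x : R => Num.max (x - t) 0 ^+ 2).
  by apply: msq; apply: measurable_funB.
have m2 : measurable_fun setT (fun x : R => Num.max (2 * mu - x - t) 0 ^+ 2).
  by apply: msq; apply: measurable_funB => //; apply: measurable_funB.
have m3 : measurable_fun setT (fun x : R => (x - mu) ^+ 2).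
  by apply: measurable_funX; apply: measurable_funB.
have hsym := @sym_integral _ F mu hs (fun x : R => (Num.max (x - t) 0 ^+ 2)%:E)
   (ltac:(exact/measurable_EFinP)) (fun x => ltac:(by rewrite lee_fin sqr_ge0)).
have P1 : F [set: R] = 1%E by exact: probability_setT.
have key : (stop_loss2 t F + stop_loss2 t F <= (A + C * sigma ^+ 2)%:E)%E.
  rewrite {2}/stop_loss2 hsym /stop_loss2 -ge0_integralD //; last first.
  - exact/measurable_EFinP.
  - by move=> x _; rewrite lee_fin sqr_ge0.
  - exact/measurable_EFinP.
  - by move=> x _; rewrite lee_fin sqr_ge0.
  apply: (@le_trans _ _ (\int[F]_x (A%:E + C%:E * ((x - mu) ^+ 2)%:E))%E).
    apply: ge0_le_integral => //.
    - by move=> x _; rewrite adde_ge0 // lee_fin sqr_ge0.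
    - apply/measurable_EFinP; apply: measurable_funD.
        exact: m1.
      exact: m2.
    - apply: emeasurable_funD; first exact: measurable_cst.
      by apply: emeasurable_funM; [exact: measurable_cst|exact/measurable_EFinP].
    - move=> x _; rewrite -EFinM -EFinD -EFinD lee_fin.
      exact: hpw.
  rewrite ge0_integralD //; last first.
  - by apply: emeasurable_funM; [exact: measurable_cst|exact/measurable_EFinP].
  - by move=> x _; rewrite -EFinM lee_fin mulr_ge0 // sqr_ge0.
  rewrite ge0_integralZl_EFin //; last first.
  - exact/measurable_EFinP.
  - by move=> x _; rewrite lee_fin sqr_ge0.
  rewrite hv integral_cst //.
  have -> : (A%:E * F [set: R] = A%:E)%E.
    by apply: (etrans (congr1 (fun z => (A%:E * z)%E) P1)); rewrite mule1.
  by rewrite -EFinM -EFinD.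
have s0 : (0 <= stop_loss2 t F)%E.
  by apply: integral_ge0 => x _; rewrite lee_fin sqr_ge0.
move: key s0; case: (stop_loss2 t F) => [r| |] //=.
by rewrite -EFinD !lee_fin => k s0; lra.
Qed.

Lemma maxsq (R : realFieldType) (y : R) :
  (0 <= y /\ Num.max y 0 ^+ 2 = y ^+ 2) \/ (y <= 0 /\ Num.max y 0 ^+ 2 = 0).
Proof.
have [h|h] := leP y 0.
  by right; split => //; rewrite expr0n.
by left; split => //; lra.
Qed.

Lemma pw1 (R : realFieldType) (mu s t x : R) : t <= mu - s ->
  Num.max (x - t) 0 ^+ 2 + Num.max (2 * mu - x - t) 0 ^+ 2 <=
  2 * (t - mu) ^+ 2 + 2 * (x - mu) ^+ 2.
Proof.
move=> h.
case: (@maxsq _ (x - t)) => [[h1 ->]|[h1 ->]];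
case: (@maxsq _ (2 * mu - x - t)) => [[h2 ->]|[h2 ->]]; nra.
Qed.

Lemma pw2 (R : realFieldType) (mu s t x : R) : 0 < s -> mu - s < t -> t <= mu ->
  Num.max (x - t) 0 ^+ 2 + Num.max (2 * mu - x - t) 0 ^+ 2 <=
  (mu - t) * (s + (mu - t)) + (s + (mu - t)) / s * (x - mu) ^+ 2.
Proof.
move=> hs h1 h2.
set c := mu - t. set u := x - mu.
have -> : x - t = u + c by rewrite /u /c; ring.
have -> : 2 * mu - x - t = c - u by rewrite /u /c; ring.
have hc0 : 0 <= c by rewrite /c; lra.
have hcs : c < s by rewrite /c; lra.
rewrite -(ler_pM2r hs).
have -> : (c * (s + c) + (s + c) / s * u ^+ 2) * s = c * (s + c) * s + (s + c) * u ^+ 2.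
  by field; exact: lt0r_neq0.
case: (@maxsq _ (u + c)) => [[h3 ->]|[h3 ->]];
case: (@maxsq _ (c - u)) => [[h4 ->]|[h4 ->]].
- have : 0 <= (s - c) * (c * (s - c) + (c ^+ 2 - u ^+ 2)).
    apply: mulr_ge0; first lra.
    apply: addr_ge0; first by apply: mulr_ge0; lra.
    nra.
  nra.
- have : 0 <= c * (s - u) ^+ 2 by apply: mulr_ge0 => //; exact: sqr_ge0.
  nra.
- have : 0 <= c * (s + u) ^+ 2 by apply: mulr_ge0 => //; exact: sqr_ge0.
  nra.
- nra.
Qed.

Lemma pw3 (R : realFieldType) (mu t x : R) : mu < t ->
  Num.max (x - t) 0 ^+ 2 + Num.max (2 * mu - x - t) 0 ^+ 2 <=
  0 + 1 * (x - mu) ^+ 2.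
Proof.
move=> h.
case: (@maxsq _ (x - t)) => [[h1 ->]|[h1 ->]];
case: (@maxsq _ (2 * mu - x - t)) => [[h2 ->]|[h2 ->]].
- lra.
- have : 0 <= (t - mu) * (x - mu + (x - t)) by apply: mulr_ge0; lra.
  nra.
- have : 0 <= (t - mu) * (mu - x + (2 * mu - x - t)) by apply: mulr_ge0; lra.
  nra.
- have := sqr_ge0 (x - mu); lra.
Qed.

Section disc.
Context {R : realType}.

Definition qc (q : R) : R := Num.min (Num.max q 0) (2^-1).
Lemma qc_ge0 q : 0 <= qc q.
Proof. rewrite /qc; have [h|h] := leP q 0; have [h'|h'] := leP _ (2^-1 : R); lra. Qed.
Lemma rc_ge0 q : 0 <= 1 - 2 * qc q.
Proof. rewrite /qc; have [h|h] := leP q 0; have [h'|h'] := leP _ (2^-1 : R); lra. Qed.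

Definition dmu (q x1 x2 x3 : R) : set R -> \bar R :=
  measure_add (measure_add (mscale (NngNum (qc_ge0 q)) \d_x1)
                           (mscale (NngNum (rc_ge0 q)) \d_x2))
              (mscale (NngNum (qc_ge0 q)) \d_x3).

HB.instance Definition _ q x1 x2 x3 := Measure.on (dmu q x1 x2 x3).

Lemma dmuE q x1 x2 x3 A : dmu q x1 x2 x3 A =
  ((qc q)%:E * \d_x1 A + (1 - 2 * qc q)%:E * \d_x2 A + (qc q)%:E * \d_x3 A)%E.
Proof. rewrite /dmu /measure_add /msum /= !big_ord_recl big_ord0 adde0 /= /measure_add /msum /= !big_ord_recl big_ord0 adde0 /= /mscale /=. reflexivity. Qed.

Lemma dmu_setT q x1 x2 x3 : dmu q x1 x2 x3 setT = 1%E.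
Proof. rewrite dmuE !diracT !mule1 -!EFinD; congr EFin; ring. Qed.

HB.instance Definition _ q x1 x2 x3 :=
  Measure_isProbability.Build _ _ _ (dmu q x1 x2 x3) (dmu_setT q x1 x2 x3).


Lemma dmu_int q x1 x2 x3 (f : R -> R) : measurable_fun setT f -> (forall x, 0 <= f x) ->
  (\int[dmu q x1 x2 x3]_x (f x)%:E =
   (qc q * f x1 + (1 - 2 * qc q) * f x2 + qc q * f x3)%:E)%E.
Proof.
move=> mf f0.
have mF : measurable_fun setT (fun x => (f x)%:E) by exact/measurable_EFinP.
rewrite /dmu ge0_integral_measure_add //; last by move=> x _; rewrite lee_fin.
rewrite ge0_integral_measure_add //; last by move=> x _; rewrite lee_fin.
rewrite !ge0_integral_mscale //; try by move=> x _; rewrite lee_fin.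
rewrite !integral_dirac // !diracT !mul1e /= -!EFinM -!EFinD //.
Qed.

Lemma dmu_sym q a M x :
  dmu q (a - M) a (a + M) [set y : R | x < y - a] =
  dmu q (a - M) a (a + M) [set y : R | y - a < - x].
Proof.
rewrite !dmuE !diracE.
have e1 : ((a - M) \in [set y : R | x < y - a]) = ((a + M) \in [set y : R | y - a < - x]).
  by apply/idP/idP => /set_mem /= h; apply/mem_set => /=; lra.
have e2 : (a \in [set y : R | x < y - a]) = (a \in [set y : R | y - a < - x]).
  by apply/idP/idP => /set_mem /= h; apply/mem_set => /=; lra.
have e3 : ((a + M) \in [set y : R | x < y - a]) = ((a - M) \in [set y : R | y - a < - x]).
  by apply/idP/idP => /set_mem /= h; apply/mem_set => /=; lra.
rewrite e1 e2 e3 -!EFinM -!EFinD; congr EFin; ring.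
Qed.

Lemma qc_id q : 0 <= q -> q <= 2^-1 -> qc q = q.
Proof. move=> h1 h2; rewrite /qc; have [h|h] := leP q 0; have [h'|h'] := leP _ (2^-1 : R); lra. Qed.

Lemma dmu_LS mu sigma M : 0 < sigma -> sigma <= M ->
  LS mu sigma (dmu (sigma ^+ 2 / (2 * M ^+ 2)) (mu - M) mu (mu + M)).
Proof.
move=> hs hM.
have M0 : 0 < M by lra.
set q := sigma ^+ 2 / (2 * M ^+ 2).
have hq : qc q = q.
  apply: qc_id; first by rewrite /q divr_ge0 // ?sqr_ge0 // mulr_ge0 // sqr_ge0.
  rewrite /q ler_pdivrMr; last by rewrite mulr_gt0 // exprn_gt0.
  have : sigma ^+ 2 <= M ^+ 2 by nra.
  lra.
have i1 : (dmu q (mu - M) mu (mu + M)).-integrable setT (fun x : R => x%:E).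
  apply/integrableP; split; first exact/measurable_EFinP.
  by rewrite (eq_integral (fun x : R => (`|x|)%:E)) // dmu_int //; exact: ltry.
have hsym := dmu_sym q mu M.
split => //.
- have fin := integrable_fin_num measurableT i1.
  rewrite -(fineK fin); congr EFin.
  by apply: (@sym_mean _ _ mu _ hsym i1); rewrite fineK.
- rewrite dmu_int //; last by move=> x; exact: sqr_ge0.
  rewrite hq; congr EFin; rewrite /q; field.
  by rewrite lt0r_neq0.
- by exists mu.
Qed.
End disc.

Lemma maxsq_ge0 (R : realFieldType) (y : R) : 0 <= y -> Num.max y 0 ^+ 2 = y ^+ 2.
Proof. move=> h; case: (@maxsq _ y) => [[_ ->]|[h' ->]] //; have -> : y = 0 by lra. by rewrite expr0n. Qed.
Lemma maxsq_le0 (R : realFieldType) (y : R) : y <= 0 -> Num.max y 0 ^+ 2 = 0.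
Proof. move=> h; case: (@maxsq _ y) => [[h' ->]|[h' ->]] //; have -> : y = 0 by lra. by rewrite expr0n. Qed.

Lemma sl_dmu (R : realType) (t q x1 x2 x3 : R) :
  stop_loss2 t (dmu q x1 x2 x3) =
  (qc q * Num.max (x1 - t) 0 ^+ 2 + (1 - 2 * qc q) * Num.max (x2 - t) 0 ^+ 2
   + qc q * Num.max (x3 - t) 0 ^+ 2)%:E.
Proof.
rewrite /stop_loss2 dmu_int //; first by apply: msq; apply: measurable_funB.
by move=> x; exact: sqr_ge0.
Qed.

Theorem theorem1 (R : realType) (mu sigma t : R) (hsigma : 0 < sigma) :
  ereal_sup [set stop_loss2 t F | F in LS mu sigma] =
  (if t <= mu - sigma then sigma ^+ 2 + (t - mu) ^+ 2
   else if t <= mu then (mu - t + sigma) ^+ 2 / 2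
   else sigma ^+ 2 / 2)%:E.
Proof.
have hF0 := @dmu_LS R mu sigma sigma hsigma (lexx sigma).
have e : sigma ^+ 2 / (2 * sigma ^+ 2) = 2^-1.
  by field; rewrite lt0r_neq0 // exprn_gt0.
rewrite e in hF0.
have q0 : qc (2^-1 : R) = 2^-1 by apply: qc_id => //; rewrite invr_ge0.
have sl0 := @sl_dmu R t (2^-1) (mu - sigma) mu (mu + sigma).
rewrite q0 in sl0.
case: ifP => h1.
  apply/eqP; rewrite eq_le; apply/andP; split.
    apply: ge_ereal_sup => _ [F hF <-].
    have := @upper_gen R mu sigma t (2 * (t - mu) ^+ 2) 2 F hF
      (ltac:(by rewrite mulr_ge0 // sqr_ge0)) (ltac:(by [])) (fun x => @pw1 R mu sigma t x h1).
    have -> : (2 * (t - mu) ^+ 2 + 2 * sigma ^+ 2) / 2 = sigma ^+ 2 + (t - mu) ^+ 2 by field.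
    by [].
  apply: ereal_sup_ubound; exists (dmu 2^-1 (mu - sigma) mu (mu + sigma)) => //.
  rewrite sl0; congr EFin.
  have z : (1 - 2 * 2^-1 : R) = 0 by field.
  rewrite z mul0r addr0 (@maxsq_ge0 _ (mu - sigma - t)) ?(@maxsq_ge0 _ (mu + sigma - t)); try lra; field.
case: ifP => h2.
  have h1' : mu - sigma < t by rewrite ltNge h1.
  apply/eqP; rewrite eq_le; apply/andP; split.
    apply: ge_ereal_sup => _ [F hF <-].
    have := @upper_gen R mu sigma t ((mu - t) * (sigma + (mu - t)))
      ((sigma + (mu - t)) / sigma) F hF
      (ltac:(by apply: mulr_ge0; lra)) (ltac:(by apply: divr_ge0; lra))
      (fun x => @pw2 R mu sigma t x hsigma h1' h2).
    have -> : ((mu - t) * (sigma + (mu - t)) + (sigma + (mu - t)) / sigma * sigma ^+ 2) / 2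
              = (mu - t + sigma) ^+ 2 / 2.
      by field; rewrite lt0r_neq0.
    by [].
  apply: ereal_sup_ubound; exists (dmu 2^-1 (mu - sigma) mu (mu + sigma)) => //.
  rewrite sl0; congr EFin.
  have z : (1 - 2 * 2^-1 : R) = 0 by field.
  rewrite z mul0r addr0 (@maxsq_le0 _ (mu - sigma - t)) ?(@maxsq_ge0 _ (mu + sigma - t)); try lra; field.
have h2' : mu < t by rewrite ltNge h2.
apply/eqP; rewrite eq_le; apply/andP; split.
  apply: ge_ereal_sup => _ [F hF <-].
  have := @upper_gen R mu sigma t 0 1 F hF (lexx 0) ler01
    (fun x => @pw3 R mu t x h2').
  by rewrite add0r mul1r.
apply/lee_addgt0Pr => eps eps0.
set d := t - mu.
have d0 : 0 < d by rewrite /d; lra.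
set M := sigma + d + sigma ^+ 2 * d / eps.
have hM0 : 0 <= sigma ^+ 2 * d / eps.
  by apply: divr_ge0; [apply: mulr_ge0 => //; [exact: sqr_ge0|lra]|lra].
have hM : sigma <= M by rewrite /M; lra.
have M0 : 0 < M by lra.
have hF := @dmu_LS R mu sigma M hsigma hM.
set q := sigma ^+ 2 / (2 * M ^+ 2) in hF.
have qq0 : 0 <= q by rewrite /q divr_ge0 // ?sqr_ge0 // mulr_ge0 // sqr_ge0.
have hq : qc q = q.
  apply: qc_id => //.
  rewrite /q ler_pdivrMr; last by rewrite mulr_gt0 // exprn_gt0.
  have : sigma ^+ 2 <= M ^+ 2 by nra.
  lra.
apply: (@le_trans _ _ (stop_loss2 t (dmu q (mu - M) mu (mu + M)) + eps%:E)%E); last first.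
  by apply: leeD2r; apply: ereal_sup_ubound; exists (dmu q (mu - M) mu (mu + M)).
rewrite sl_dmu hq -EFinD lee_fin.
have r0 : 0 <= 1 - 2 * q by have := rc_ge0 q; rewrite hq.
have t1 : 0 <= q * Num.max (mu - M - t) 0 ^+ 2 by apply: mulr_ge0 => //; exact: sqr_ge0.
have t2 : 0 <= (1 - 2 * q) * Num.max (mu - t) 0 ^+ 2 by apply: mulr_ge0 => //; exact: sqr_ge0.
have e3 : Num.max (mu + M - t) 0 ^+ 2 = (M - d) ^+ 2.
  case: (@maxsq _ (mu + M - t)) => [[_ ->]|[h ->]]; rewrite /d.
    by congr (_ ^+ 2); ring.
  have dE : d = t - mu by []. rewrite /M in h; lra.
rewrite e3.
suff : sigma ^+ 2 / 2 <= q * (M - d) ^+ 2 + eps by lra.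
have -> : q * (M - d) ^+ 2 = sigma ^+ 2 / 2 - sigma ^+ 2 * (2 * M * d - d ^+ 2) / (2 * M ^+ 2).
  by rewrite /q; field; rewrite lt0r_neq0.
suff : sigma ^+ 2 * (2 * M * d - d ^+ 2) / (2 * M ^+ 2) <= eps by lra.
rewrite ler_pdivrMr; last by rewrite mulr_gt0 // exprn_gt0.
have hMe : sigma ^+ 2 * d <= eps * M.
  have : sigma ^+ 2 * d / eps <= M by rewrite /M; lra.
  by rewrite ler_pdivrMr // [eps * _]mulrC.
have : 0 <= sigma ^+ 2 * d ^+ 2 by apply: mulr_ge0; exact: sqr_ge0.
nra.
Qed.
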